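(* Let $\mathbb{F}$ be any field. The support rank of the $2\times 2$ matrix multiplication tensor $\langle 2,2,2\rangle$ over $\mathbb{F}$ is $7$. That is, every tensor $t\in \mathbb{F}^{2\times 2}\otimes\mathbb{F}^{2\times 2}\otimes\mathbb{F}^{2\times 2}$ with the same support as $\langle 2,2,2\rangle$ has tensor rank at least $7$, and some such tensor has tensor rank exactly $7$.
   Context: Let $e_{ij}$ ($i,j\in\{1,2\}$) be the standard basis of the space $\mathbb{F}^{2\times 2}$ of $2\times 2$ matrices. The matrix multiplication tensor is $\langle 2,2,2\rangle=\sum_{i,j,k\in\{1,2\}} e_{ij}\otimes e_{jk}\otimes e_{ki}\in \mathbb{F}^{2\times 2}\otimes\mathbb{F}^{2\times 2}\otimes\mathbb{F}^{2\times 2}$. The tensor rank of a tensor $t$ is the smallest $r$ such that $t$ is a sum of $r$ simple tensors $v_1\otimes v_2\otimes v_3$. With respect to the fixed basis $\{e_{ab}\otimes e_{cd}\otimes e_{ef}\}$, the support of a tensor is the set of basis elements at which it has a nonzero coefficient. The support rank of $t$ is the minimal tensor rank of a tensor (over $\mathbb{F}$) having the same support as $t$. *)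

(* Defs.v *)
From HB Require Import structures.
From mathcomp Require Import all_boot all_order all_algebra.
Set Implicit Arguments. Unset Strict Implicit. Unset Printing Implicit Defensive.
Import GRing.Theory.
Local Open Scope ring_scope.

Definition idx := ('I_2 * 'I_2)%type.

(* A tensor in F^{2x2} (x) F^{2x2} (x) F^{2x2}, given by its coefficients
   w.r.t. the basis e_{ab} (x) e_{cd} (x) e_{ef}. *)
Definition tensor (F : fieldType) := idx -> idx -> idx -> F.

(* <2,2,2> = sum_{i,j,k} e_{ij} (x) e_{jk} (x) e_{ki}. *)
Definition matmul222 (F : fieldType) : tensor F :=
  fun x y z =>
    if [&& x.2 == y.1, y.2 == z.1 & z.2 == x.1] then 1 else 0.

Definition rank_le (F : fieldType) (t : tensor F) (r : nat) : Prop :=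
  exists u v w : 'I_r -> idx -> F,
    forall x y z, t x y z = \sum_(i < r) u i x * v i y * w i z.

Definition is_tensor_rank (F : fieldType) (t : tensor F) (r : nat) : Prop :=
  rank_le t r /\ forall r', rank_le t r' -> (r <= r')%N.

Definition same_support (F : fieldType) (t s : tensor F) : Prop :=
  forall x y z, (t x y z != 0) = (s x y z != 0).

Definition is_support_rank (F : fieldType) (s : tensor F) (r : nat) : Prop :=
  (exists t, same_support t s /\ is_tensor_rank t r) /\
  (forall t, same_support t s -> forall r', rank_le t r' -> (r <= r')%N).

(* Main.v *)
Require Import Defs.
From mathcomp Require Import all_boot all_order all_algebra.
From HB Require Import structures.
From mathcomp Require Import zify ring.
From Stdlib Require Import Classical.
Set Implicit Arguments. Unset Strict Implicit. Unset Printing Implicit Defensive.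
Import GRing.Theory.
Local Open Scope ring_scope.

Section Core.
Variable F : fieldType.
Variables u v w : 'I_6 -> idx -> F.
Definition TT x y z := \sum_(j < 6) u j x * v j y * w j z.
Hypothesis Hoff : forall x (y z : idx), y.2 != z.1 -> TT x y z = 0.
Hypothesis Hdiag : forall x (p q k : 'I_2), (TT x (p,k) (k,q) != 0) = (x == (q,p)).

Definition Rel (l : 'I_6 -> F) := exists phi : idx -> F, forall j, l j = \sum_x phi x * u j x.

Lemma sumS1 (phi : idx -> F) y z :
  \sum_(j < 6) (\sum_x phi x * u j x) * v j y * w j z = \sum_x phi x * TT x y z.
Proof.
rewrite /TT.
under eq_bigr do rewrite big_distrl /= big_distrl /=.
rewrite exchange_big /=; apply: eq_bigr => x _; rewrite big_distrr /=.
by apply: eq_bigr => j _; rewrite !mulrA.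
Qed.

Lemma Ax1 l : Rel l -> forall y z : idx, y.2 != z.1 -> \sum_(j < 6) l j * v j y * w j z = 0.
Proof.
case=> phi Hp y z Hyz.
under eq_bigr do rewrite Hp.
by rewrite sumS1 big1 // => x _; rewrite Hoff // mulr0.
Qed.

Lemma phi_core (phi : idx -> F) k :
  (forall p q, \sum_x phi x * TT x (p,k) (k,q) = 0) -> forall x, phi x = 0.
Proof.
move=> H [q p]; have := H p q.
rewrite (bigD1 (q,p)) //= big1 ?addr0; last first.
  by move=> x Hx; apply/eqP; rewrite mulf_eq0; apply/orP; right; rewrite -[_ == 0]negbK Hdiag.
move/eqP; rewrite mulf_eq0 => /orP [/eqP //|]; by rewrite -[_ == 0]negbK Hdiag eqxx.
Qed.

Lemma Ax2 l k : Rel l -> (forall p q, \sum_(j < 6) l j * v j (p,k) * w j (k,q) = 0) ->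
  forall j, l j = 0.
Proof.
case=> phi Hp H.
have H0 : forall x, phi x = 0.
  apply: (phi_core (k:=k)) => p q; rewrite -sumS1 -[RHS](H p q).
  by apply: eq_bigr => j _; rewrite Hp.
by move=> j; rewrite Hp big1 // => x _; rewrite H0 mul0r.
Qed.

Lemma phi0 (phi : idx -> F) : (forall j, \sum_x phi x * u j x = 0) -> forall x, phi x = 0.
Proof.
move=> H; apply: (phi_core (k:=0)) => p q; rewrite -sumS1.
by apply: big1 => j _; rewrite H !mul0r.
Qed.

Definition W k l j (pq : idx) := v j (pq.1, k) * w j (l, pq.2).

Lemma Ax3 k (nu : idx -> F) : (forall j, \sum_pq nu pq * W k k j pq = 0) -> forall pq, nu pq = 0.
Proof.
move=> H [p q].
have E : \sum_(j < 6) u j (q,p) * (\sum_pq nu pq * W k k j pq) = 0.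
  by apply: big1 => j _; rewrite H mulr0.
move: E; under eq_bigr do rewrite big_distrr /=.
have G : forall p' q', \sum_(i < 6) u i (q, p) * (nu (p', q') * W k k i (p', q')) = nu (p',q') * TT (q,p) (p',k) (k,q').
  move=> p' q'; rewrite /TT big_distrr; apply: eq_bigr => j _; rewrite /W /=.
  by rewrite mulrCA !mulrA.
rewrite exchange_big /= (bigD1 (p,q)) //= [X in _ + X]big1 ?addr0.
  rewrite G; move/eqP; rewrite mulf_eq0 => /orP [/eqP //|]; by rewrite -[_ == 0]negbK Hdiag eqxx.
move=> [p' q'] Hpq /=; rewrite G.
have : TT (q,p) (p',k) (k,q') = 0.
  apply/eqP; rewrite -[_ == 0]negbK Hdiag.
  apply/negP => /eqP [E1 E2]; move: Hpq; by rewrite E1 E2 eqxx.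
by move->; rewrite mulr0.
Qed.


Definition comb3 (al : F) (a : 'I_6) (be : F) (b : 'I_6) (ga : F) (c : 'I_6) :=
  fun j : 'I_6 => al * (j == a)%:R + be * (j == b)%:R + ga * (j == c)%:R.

Lemma sum_enum (f : idx -> F) : \sum_(r < #|{: idx}|) f (enum_val r) = \sum_x f x.
Proof.
rewrite [RHS](reindex (fun r : 'I_#|{: idx}| => enum_val r)) //=.
by apply: onW_bij; exact: enum_val_bij.
Qed.

Lemma sum3 (f : 'I_3 -> F) :
  \sum_(i < 3) f i = f (@Ordinal 3 0 isT) + f (@Ordinal 3 1 isT) + f (@Ordinal 3 2 isT).
Proof.
rewrite !big_ord_recl big_ord0 addr0 addrA.
by congr (f _ + f _ + f _); apply: val_inj.
Qed.

Lemma card_idx : #|{: idx}| = 4%N.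
Proof. by rewrite card_prod !card_ord. Qed.

Definition Ut : 'M[F]_(#|{: idx}|, 6) := \matrix_(r, j) u j (enum_val r).

Lemma Ut_free : row_free Ut.
Proof.
apply/inj_row_free => g Hg.
pose phi x := g 0 (enum_rank x).
have H : forall x, phi x = 0.
  apply: phi0 => j.
  have := congr1 (fun M : 'M[F]_(1,6) => M 0 j) Hg; rewrite !mxE => E; rewrite -[RHS]E.
  rewrite -(sum_enum (fun x => phi x * u j x)); apply: eq_bigr => r _; by rewrite /phi enum_valK ?mxE.
apply/rowP => r; rewrite mxE.
by have := H (enum_val r); rewrite /phi enum_valK.
Qed.

Lemma Ax4 a b c : a != b -> a != c -> b != c ->
  exists al be ga, [|| al != 0, be != 0 | ga != 0] /\ Rel (comb3 al a be b ga c).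
Proof.
move=> hab hac hbc.
pose S : 'M[F]_(3,6) := \matrix_(i, j) (j == nth a [:: a; b; c] i)%:R.
have rS : \rank S = 3%N.
  apply/eqP/inj_row_free => g Hg.
  have Hv : forall j, \sum_(i < 3) g 0 i * (j == nth a [:: a; b; c] i)%:R = 0.
    by move=> j; have := congr1 (fun M : 'M[F]_(1,6) => M 0 j) Hg; rewrite !mxE => E; rewrite -[RHS]E; apply: eq_bigr => i _; rewrite mxE.
  have := Hv a; have := Hv b; have := Hv c.
  have nab : (a == b) = false by apply/negbTE.
  have nba : (b == a) = false by rewrite eq_sym; apply/negbTE.
  have nac : (a == c) = false by apply/negbTE.
  have nca : (c == a) = false by rewrite eq_sym; apply/negbTE.
  have nbc : (b == c) = false by apply/negbTE.
  have ncb : (c == b) = false by rewrite eq_sym; apply/negbTE.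
  rewrite !sum3 /= !eqxx nab nba nac nca nbc ncb /=.
  rewrite !mulr0 !mulr1 !add0r !addr0 => h2 h1 h0.
  apply/rowP => i; rewrite mxE.
  case: i => [[|[|[|i]]] Hi] //.
  - by rewrite -h0; congr (g _ _); apply: val_inj.
  - by rewrite -h1; congr (g _ _); apply: val_inj.
  - by rewrite -h2; congr (g _ _); apply: val_inj.
have rU : \rank Ut = #|{: idx}| by apply/eqP; exact: Ut_free.
have Hcap := mxrank_sum_cap Ut S.
have Hle := rank_leq_col (Ut + S)%MS.
have Hpos : (0 < \rank (Ut :&: S))%N.
  move: Hcap Hle; rewrite rU rS.
  move: (\rank (Ut + S)%MS) (\rank (Ut :&: S)%MS) => r1 r2 H1 H2.
  rewrite card_idx in H1; lia.
have : (Ut :&: S)%MS != 0 by rewrite -mxrank_eq0 -lt0n.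
case/rowV0Pn => vv Hvv vnz.
have /submxP [D HD] : (vv <= Ut)%MS by apply: submx_trans Hvv (capmxSl _ _).
have /submxP [G HG] : (vv <= S)%MS by apply: submx_trans Hvv (capmxSr _ _).
exists (G 0 (@Ordinal 3 0 isT)), (G 0 (@Ordinal 3 1 isT)), (G 0 (@Ordinal 3 2 isT)).
have Hcomb : forall j, vv 0 j = comb3 (G 0 (@Ordinal 3 0 isT)) a (G 0 (@Ordinal 3 1 isT)) b (G 0 (@Ordinal 3 2 isT)) c j.
  move=> j; rewrite HG mxE sum3 /comb3 !mxE /=; by [].
split.
  case/rV0Pn: vnz => j Hj.
  have [h0|//] := eqVneq (G 0 (@Ordinal 3 0 isT)) 0; have [h1|//] := eqVneq (G 0 (@Ordinal 3 1 isT)) 0.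
  have [h2|//] := eqVneq (G 0 (@Ordinal 3 2 isT)) 0.
  by move: Hj; rewrite Hcomb /comb3 h0 h1 h2 !mul0r !addr0 eqxx.
exists (fun x => D 0 (enum_rank x)); move=> j.
rewrite -Hcomb HD mxE -(sum_enum (fun x => D 0 (enum_rank x) * u j x)); apply: eq_bigr => r _; by rewrite enum_valK mxE.
Qed.

Lemma L3 (a1 a2 a3 : idx -> F) : exists nu : idx -> F, (exists x, nu x != 0) /\
  \sum_x nu x * a1 x = 0 /\ \sum_x nu x * a2 x = 0 /\ \sum_x nu x * a3 x = 0.
Proof.
pose M : 'M[F]_(#|{: idx}|, 3) := \matrix_(r, i) (nth a1 [:: a1; a2; a3] i) (enum_val r).
have : ~~ row_free M.
  rewrite /row_free; apply/negP => /eqP H.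
  have := rank_leq_col M; rewrite H card_idx; lia.
rewrite -kermx_eq0 => /rowV0Pn [vv Hvv vnz].
have H0 : vv *m M = 0 by apply/sub_kermxP.
have Hi : forall i : 'I_3, \sum_x vv 0 (enum_rank x) * (nth a1 [:: a1; a2; a3] i) x = 0.
  move=> i; have := congr1 (fun N : 'M[F]_(1,3) => N 0 i) H0; rewrite !mxE => E; rewrite -[RHS]E.
  rewrite -(sum_enum (fun x => vv 0 (enum_rank x) * (nth a1 [:: a1; a2; a3] i) x)); apply: eq_bigr => r _; by rewrite enum_valK mxE.
exists (fun x => vv 0 (enum_rank x)); split.
  case/rV0Pn: vnz => r Hr; exists (enum_val r); by rewrite enum_valK.
split; first exact: (Hi (@Ordinal 3 0 isT)).
split; first exact: (Hi (@Ordinal 3 1 isT)).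
exact: (Hi (@Ordinal 3 2 isT)).
Qed.

Definition Wz k l j := forall pq : idx, W k l j pq = 0.
Definition nz2 (f : 'I_2 -> F) := f 0 != 0 \/ f 1 != 0.
Definition Bk (k : 'I_2) j := fun p : 'I_2 => v j (p, k).
Definition Ck (l : 'I_2) j := fun q : 'I_2 => w j (l, q).
Definition full j := forall k, nz2 (Bk k j) /\ nz2 (Ck k j).
Definition cross (f g : 'I_2 -> F) := f 0 * g 1 - f 1 * g 0.

Lemma ord2 (p : 'I_2) : p = 0 \/ p = 1.
Proof. by case: p => [[|[|n]] Hn]; [left|right|]; try apply: val_inj. Qed.

Lemma nz2_ex f : nz2 f -> exists p, f p != 0.
Proof. by case=> H; [exists 0|exists 1]. Qed.

Lemma not_nz2 f : ~ nz2 f -> forall p, f p = 0.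
Proof.
move=> H p; apply/eqP; apply/negPn/negP => Hp; apply: H.
by case: (ord2 p) Hp => ->; [left|right].
Qed.

Lemma W_nz k l j : nz2 (Bk k j) -> nz2 (Ck l j) -> exists pq, W k l j pq != 0.
Proof.
move=> /nz2_ex [p Hp] /nz2_ex [q Hq]; exists (p,q); by rewrite /W mulf_neq0.
Qed.

Lemma W_nWz k l j : nz2 (Bk k j) -> nz2 (Ck l j) -> ~ Wz k l j.
Proof. by move=> H1 H2 Hz; case: (W_nz H1 H2) => pq; rewrite Hz eqxx. Qed.

Lemma full_nWz k l j : full j -> ~ Wz k l j.
Proof. move=> Hf; apply: W_nWz; [exact: (Hf k).1 | exact: (Hf l).2]. Qed.

Lemma Wz_B k l j : ~ nz2 (Bk k j) -> Wz k l j.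
Proof. move=> H [p q]; rewrite /W /=; have := not_nz2 H p; rewrite /Bk => ->; by rewrite mul0r. Qed.

Lemma Wz_C k l j : ~ nz2 (Ck l j) -> Wz k l j.
Proof. move=> H [p q]; rewrite /W /=; have := not_nz2 H q; rewrite /Ck => ->; by rewrite mulr0. Qed.

Lemma ord2_other (k l m : 'I_2) : k != l -> m = k \/ m = l.
Proof.
case: (ord2 k) => ->; case: (ord2 l) => -> //; case: (ord2 m) => ->; by [left|right].
Qed.

Lemma nonfull j : ~ full j -> forall k l, k != l ->
  (Wz k k j \/ Wz l l j) /\ (Wz k l j \/ Wz l k j).
Proof.
move=> Hnf k l Hkl.
have [m Hm] : exists m, ~ nz2 (Bk m j) \/ ~ nz2 (Ck m j).
  apply: NNPP => H; apply: Hnf => m; split; apply: NNPP => H'; apply: H; exists m; by [left|right].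
case: (ord2_other m Hkl) => ->{m} in Hm; case: Hm => Hm.
- by split; left; apply: Wz_B.
- by split; [left; apply: Wz_C| right; apply: Wz_C].
- by split; right; apply: Wz_B.
- by split; [right; apply: Wz_C| left; apply: Wz_C].
Qed.

Lemma Rel_ext l1 l2 : (forall j, l1 j = l2 j) -> Rel l1 -> Rel l2.
Proof. move=> E [phi Hp]; exists phi => j; by rewrite -E. Qed.

Lemma Rel0 l : (forall j, l j = 0) -> Rel l.
Proof. move=> H; exists (fun _ => 0) => j; rewrite H big1 // => x _; by rewrite mul0r. Qed.

Lemma sum_delta (al : F) a (f : 'I_6 -> F) : \sum_(j < 6) al * (j == a)%:R * f j = al * f a.
Proof.
rewrite (bigD1 a) //= eqxx mulr1 big1 ?addr0 // => j /negbTE ->; by rewrite mulr0 mul0r.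
Qed.

Lemma sum_comb al a be b ga c (f : 'I_6 -> F) :
  \sum_(j < 6) comb3 al a be b ga c j * f j = al * f a + be * f b + ga * f c.
Proof.
rewrite /comb3; under eq_bigr do rewrite !mulrDl.
by rewrite !big_split /= !sum_delta.
Qed.

Lemma Ax1c al a be b ga c k l : Rel (comb3 al a be b ga c) -> k != l ->
  forall pq, al * W k l a pq + be * W k l b pq + ga * W k l c pq = 0.
Proof.
move=> HR Hkl [p q]; have := Ax1 HR (y := (p,k)) (z := (l,q)) Hkl.
under eq_bigr do rewrite -mulrA; by rewrite sum_comb.
Qed.

Lemma Ax2c al a be b ga c k : Rel (comb3 al a be b ga c) ->
  (forall pq, al * W k k a pq + be * W k k b pq + ga * W k k c pq = 0) ->
  forall j, comb3 al a be b ga c j = 0.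
Proof.
move=> HR H; apply: (Ax2 (k:=k) HR) => p q.
under eq_bigr do rewrite -mulrA; rewrite sum_comb; exact: (H (p,q)).
Qed.

Lemma comb_a al a be b ga c : a != b -> a != c -> comb3 al a be b ga c a = al.
Proof. by move=> /negbTE h1 /negbTE h2; rewrite /comb3 eqxx h1 h2 !mulr0 mulr1 !addr0. Qed.

Definition NZ a := forall al, Rel (comb3 al a 0 a 0 a) -> al = 0.
Definition Ind a b := forall al be, Rel (comb3 al a be b 0 a) -> al = 0 /\ be = 0.

Lemma NZ_Wz k j : Wz k k j -> NZ j.
Proof.
move=> Hz al HR.
have E : comb3 al j 0 j 0 j j = 0.
  apply: (Ax2c (k:=k) HR) => pq; by rewrite Hz !mulr0 !addr0.
by move: E; rewrite /comb3 eqxx !mulr1 !addr0.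
Qed.

Lemma NZ_full j : full j -> NZ j.
Proof.
move=> Hf al HR; have Hkl : (0 : 'I_2) != 1 by [].
have [pq Hpq] := W_nz (Hf 0).1 (Hf 1).2.
have := Ax1c HR Hkl pq; rewrite !mul0r !addr0 => /eqP; rewrite mulf_eq0 => /orP [/eqP //|].
by rewrite (negbTE Hpq).
Qed.

Lemma Ind_Wz k a b : a != b -> Wz k k a -> Wz k k b -> Ind a b.
Proof.
move=> hab Ha Hb al be HR.
have H0 : forall pq, al * W k k a pq + be * W k k b pq + 0 * W k k a pq = 0.
  by move=> pq; rewrite Ha Hb !mulr0 !addr0.
have Ea := Ax2c HR H0 a; have Eb := Ax2c HR H0 b.
move: Ea Eb; rewrite /comb3 eqxx (negbTE hab) eq_sym (negbTE hab) eqxx.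
by rewrite !mulr0 !mulr1 !addr0 !add0r => -> ->.
Qed.

Lemma Ind_neq a b : Ind a b -> a != b.
Proof.
move=> H; apply/negP => /eqP E; subst b.
have := H 1 (-1) (Rel0 _); rewrite /comb3 => /(_ _) [] //.
  by move=> j; rewrite mulN1r mul1r subrr mul0r addr0.
by move=> /eqP; rewrite oner_eq0.
Qed.

Lemma Rel_scale s l : Rel l -> Rel (fun j => s * l j).
Proof.
case=> phi Hp; exists (fun x => s * phi x) => j.
rewrite Hp big_distrr; apply: eq_bigr => x _; exact: mulrA.
Qed.

Lemma comb_b al a be b ga c : b != a -> b != c -> comb3 al a be b ga c b = be.
Proof. by move=> /negbTE h1 /negbTE h2; rewrite /comb3 eqxx h1 h2 !mulr0 mulr1 add0r addr0. Qed.

Lemma comb_c al a be b ga c : c != a -> c != b -> comb3 al a be b ga c c = ga.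
Proof. by move=> /negbTE h1 /negbTE h2; rewrite /comb3 eqxx h1 h2 !mulr0 mulr1 !add0r. Qed.

Lemma D_lemma a b : Ind a b -> forall c, exists ga de, Rel (comb3 1 c ga a de b).
Proof.
move=> HI c; have hab := Ind_neq HI.
case: (eqVneq c a) => [->|hca].
  exists (-1), 0; apply: Rel0 => j; by rewrite /comb3 mul1r mulN1r subrr mul0r addr0.
case: (eqVneq c b) => [->|hcb].
  exists 0, (-1); apply: Rel0 => j; by rewrite /comb3 mul1r mul0r addr0 mulN1r subrr.
have hac : a != c by rewrite eq_sym.
have hbc : b != c by rewrite eq_sym.
have [al [be [ga [Hnz HR]]]] := Ax4 hab hac hbc.
case: (eqVneq ga 0) => [hg|hg].
  have HR' : Rel (comb3 al a be b 0 a).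
    by apply: Rel_ext HR => j; rewrite /comb3 hg !mul0r.
  have [h1 h2] := HI _ _ HR'.
  by move: Hnz; rewrite h1 h2 hg eqxx.
exists (al / ga), (be / ga).
apply: Rel_ext (Rel_scale (ga^-1) HR) => j.
rewrite /comb3 !mulrDr !mulrA [ga^-1 * ga]mulrC divff // mul1r.
by rewrite [_ * al]mulrC [_ * be]mulrC addrC addrA.
Qed.

Lemma three_contra k a b c : a != b -> a != c -> b != c ->
  Wz k k a -> Wz k k b -> Wz k k c -> False.
Proof.
move=> hab hac hbc Ha Hb Hc.
have [al [be [ga [Hnz HR]]]] := Ax4 hab hac hbc.
have H0 : forall pq, al * W k k a pq + be * W k k b pq + ga * W k k c pq = 0.
  by move=> pq; rewrite Ha Hb Hc !mulr0 !addr0.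
have Ea := Ax2c HR H0 a; have Eb := Ax2c HR H0 b; have Ec := Ax2c HR H0 c.
rewrite comb_a // in Ea.
rewrite comb_b ?(eq_sym b a) // in Eb.
rewrite comb_c ?(eq_sym c a) ?(eq_sym c b) // in Ec.
by move: Hnz; rewrite Ea Eb Ec eqxx.
Qed.

Lemma cover k : exists p q, forall j, Wz k k j -> j = p \/ j = q.
Proof.
case: (classic (exists p, Wz k k p)) => [[p Hp]|Hn]; last first.
  by exists 0, 0 => j Hj; exfalso; apply: Hn; exists j.
case: (classic (exists q, Wz k k q /\ q != p)) => [[q [Hq hqp]]|Hn]; last first.
  exists p, p => j Hj; left; case: (eqVneq j p) => // hjp; exfalso; apply: Hn; by exists j.
exists p, q => j Hj.
case: (eqVneq j p) => [->|hjp]; first by left.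
case: (eqVneq j q) => [->|hjq]; first by right.
exfalso; apply: (three_contra (a:=p) (b:=q) (c:=j) (k:=k)) => //; by rewrite eq_sym.
Qed.

Lemma SpanContra k (a1 a2 a3 : idx -> F) :
  (forall j, exists s1 s2 s3, forall pq, W k k j pq = s1 * a1 pq + s2 * a2 pq + s3 * a3 pq) -> False.
Proof.
move=> H.
have [nu [[x Hx] [H1 [H2 H3]]]] := L3 a1 a2 a3.
suff : nu x = 0 by move=> E; move: Hx; rewrite E eqxx.
apply: (Ax3 (k:=k)) => j.
have [s1 [s2 [s3 Hs]]] := H j.
under eq_bigr do rewrite Hs.
have -> : \sum_pq nu pq * (s1 * a1 pq + s2 * a2 pq + s3 * a3 pq) =
  s1 * (\sum_pq nu pq * a1 pq) + s2 * (\sum_pq nu pq * a2 pq) + s3 * (\sum_pq nu pq * a3 pq).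
  rewrite !big_distrr -!big_split; apply: eq_bigr => pq _ /=; ring.
by rewrite H1 H2 H3 !mulr0 !addr0.
Qed.

Lemma cross_outer (x y x' y' : 'I_2 -> F) :
  (forall p q, x p * y q = x' p * y' q) -> nz2 y -> cross x x' = 0.
Proof.
move=> H /nz2_ex [q Hq].
have E : cross x x' * y q = 0.
  rewrite /cross; transitivity (x 0 * y q * x' 1 - x 1 * y q * x' 0); first by ring.
  rewrite (H 0 q) (H 1 q); ring.
by move: E => /eqP; rewrite mulf_eq0 (negbTE Hq) orbF => /eqP.
Qed.

Lemma cross_outer_r (x y x' y' : 'I_2 -> F) :
  (forall p q, x p * y q = x' p * y' q) -> nz2 x -> cross y y' = 0.
Proof.
move=> H /nz2_ex [p Hp].
have E : cross y y' * x p = 0.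
  rewrite /cross; transitivity (x p * y 0 * y' 1 - x p * y 1 * y' 0); first by ring.
  rewrite (H p 0) (H p 1); ring.
by move: E => /eqP; rewrite mulf_eq0 (negbTE Hp) orbF => /eqP.
Qed.

Lemma par_scale f g : cross f g = 0 -> nz2 g -> exists s, forall p, f p = s * g p.
Proof.
rewrite /cross => /eqP; rewrite subr_eq0 => /eqP E [hg|hg].
  exists (f 0 / g 0) => p; case: (ord2 p) => ->; first by rewrite divfK.
  by rewrite mulrAC E mulfK.
exists (f 1 / g 1) => p; case: (ord2 p) => ->; last by rewrite divfK.
by rewrite mulrAC -E mulfK.
Qed.

Lemma det_lemma (x y x' y' x'' y'' : 'I_2 -> F) s t :
  (forall p q, x'' p * y'' q = s * (x p * y q) + t * (x' p * y' q)) ->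
  s * t * cross x x' * cross y y' = 0.
Proof.
move=> H.
transitivity ((s * (x 0 * y 0) + t * (x' 0 * y' 0)) * (s * (x 1 * y 1) + t * (x' 1 * y' 1)) -
  (s * (x 0 * y 1) + t * (x' 0 * y' 1)) * (s * (x 1 * y 0) + t * (x' 1 * y' 0))).
  rewrite /cross; ring.
rewrite -!H; ring.
Qed.

Lemma R1 k l : k != l -> forall a, NZ a -> Wz k l a -> forall j j', full j -> full j' ->
  cross (Bk k j') (Bk k j) = 0 /\ cross (Ck l j') (Ck l j) = 0.
Proof.
move=> hkl a Ha Hz j j' Hj Hj'.
have HI : Ind a j.
  move=> al be HR.
  have [pq Hpq] := W_nz (Hj k).1 (Hj l).2.
  have := Ax1c HR hkl pq; rewrite Hz mulr0 add0r mul0r addr0 => /eqP.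
  rewrite mulf_eq0 (negbTE Hpq) orbF => /eqP hbe; split => //.
  apply: Ha; apply: Rel_ext HR => i; by rewrite /comb3 hbe !mul0r.
have [ga [de HR]] := D_lemma HI j'.
have E : forall p q, Bk k j' p * Ck l j' q = Bk k j p * (- de * Ck l j q).
  move=> p q; have := Ax1c HR hkl (p,q); rewrite Hz mulr0 addr0 mul1r /W /=.
  move/eqP; rewrite addr_eq0 => /eqP ->; rewrite /Bk /Ck; ring.
split.
  exact: (cross_outer E (Hj' l).2).
have E' : forall p q, Bk k j' p * Ck l j' q = (- de * Bk k j p) * Ck l j q.
  by move=> p q; rewrite E; ring.
exact: (cross_outer_r E' (Hj' k).1).
Qed.


Lemma e00 : ((0 : 'I_2) == 0) = true. Proof. by []. Qed.
Lemma e01 : ((0 : 'I_2) == 1) = false. Proof. by []. Qed.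
Lemma e10 : ((1 : 'I_2) == 0) = false. Proof. by []. Qed.
Lemma e11 : ((1 : 'I_2) == 1) = true. Proof. by []. Qed.
Lemma n01 : (0 : 'I_2) != 1. Proof. by []. Qed.
Lemma n10 : (1 : 'I_2) != 0. Proof. by []. Qed.

Lemma span_par k j a : cross (Bk k j) (Bk k a) = 0 -> cross (Ck k j) (Ck k a) = 0 -> full a ->
  exists s, forall pq, W k k j pq = s * W k k a pq.
Proof.
move=> HB HC Ha.
have [s1 Hs1] := par_scale HB (Ha k).1; have [s2 Hs2] := par_scale HC (Ha k).2.
exists (s1 * s2) => [[p q]]; rewrite /W /=.
have := Hs1 p; have := Hs2 q; rewrite /Bk /Ck => -> ->; ring.
Qed.

Lemma span_B k j n : cross (Bk k j) n = 0 -> nz2 n ->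
  exists s1 s2, forall pq, W k k j pq = s1 * (n pq.1 * (pq.2 == 0)%:R) + s2 * (n pq.1 * (pq.2 == 1)%:R).
Proof.
move=> HB Hn; have [s Hs] := par_scale HB Hn.
exists (s * Ck k j 0), (s * Ck k j 1) => [[p q]]; rewrite /W /=.
have := Hs p; rewrite /Bk /Ck => ->.
case: (ord2 q) => ->; rewrite ?e00 ?e01 ?e10 ?e11 /=; ring.
Qed.

Lemma span_C k j m : cross (Ck k j) m = 0 -> nz2 m ->
  exists s1 s2, forall pq, W k k j pq = s1 * ((pq.1 == 0)%:R * m pq.2) + s2 * ((pq.1 == 1)%:R * m pq.2).
Proof.
move=> HC Hm; have [s Hs] := par_scale HC Hm.
exists (s * Bk k j 0), (s * Bk k j 1) => [[p q]]; rewrite /W /=.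
have := Hs q; rewrite /Bk /Ck => ->.
case: (ord2 p) => ->; rewrite ?e00 ?e01 ?e10 ?e11 /=; ring.
Qed.

Lemma exfull : exists j, full j.
Proof.
apply: NNPP => Hn.
have [p [q Hpq]] := cover 1.
apply: (SpanContra (k:=0) (a1 := W 0 0 p) (a2 := W 0 0 q) (a3 := fun _ => 0)) => j.
have Hnf : ~ full j by move=> Hf; apply: Hn; exists j.
have [[H00|H11] _] := nonfull Hnf n01.
  by exists 0, 0, 0 => pq; rewrite H00 !mul0r !addr0.
case: (Hpq j H11) => ->.
  by exists 1, 0, 0 => pq; rewrite mul1r !mul0r !addr0.
by exists 0, 1, 0 => pq; rewrite mul1r !mul0r !addr0 add0r.
Qed.

Lemma case_both : (exists a, NZ a /\ Wz 0 1 a) -> (exists a, NZ a /\ Wz 1 0 a) -> False.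
Proof.
move=> [a [Ha Hza]] [b [Hb Hzb]].
have [j0 Hj0] := exfull.
have [p [q Hpq]] := cover 1.
apply: (SpanContra (k:=0) (a1 := W 0 0 j0) (a2 := W 0 0 p) (a3 := W 0 0 q)) => j.
case: (classic (full j)) => Hf.
  have [HB _] := R1 n01 Ha Hza Hj0 Hf.
  have [_ HC] := R1 n10 Hb Hzb Hj0 Hf.
  have [s Hs] := span_par HB HC Hj0.
  by exists s, 0, 0 => pq; rewrite Hs !mul0r !addr0.
have [[H00|H11] _] := nonfull Hf n01.
  by exists 0, 0, 0 => pq; rewrite H00 !mul0r !addr0.
case: (Hpq j H11) => ->.
  by exists 0, 1, 0 => pq; rewrite mul1r !mul0r !addr0 add0r.
by exists 0, 0, 1 => pq; rewrite mul1r !mul0r !add0r.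
Qed.

Lemma case_one k l : k != l -> (exists a, NZ a /\ Wz k l a) -> (forall a, NZ a -> ~ Wz l k a) -> False.
Proof.
move=> hkl [a [Ha Hza]] Hnot.
have [j0 Hj0] := exfull.
have Hkl_of : forall j, Wz l l j -> Wz k l j.
  move=> j H1.
  have Hnf : ~ full j by move=> Hf; exact: (full_nWz Hf H1).
  have [_ [H|H]] := nonfull Hnf hkl => //.
  by exfalso; apply: (Hnot j (NZ_Wz H1) H).
have Hcov : exists p, forall j, Wz l l j -> j = p.
  case: (classic (exists j1 j2, j1 != j2 /\ Wz l l j1 /\ Wz l l j2)) => [[j1 [j2 [h12 [H1 H2]]]]|Hn].
    exfalso.
    have HI := Ind_Wz h12 H1 H2.
    have Hk1 := Hkl_of j1 H1; have Hk2 := Hkl_of j2 H2.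
    have [ga [de HR]] := D_lemma HI j0.
    apply: (full_nWz (k:=k) (l:=l) Hj0) => pq.
    by have := Ax1c HR hkl pq; rewrite Hk1 Hk2 !mulr0 !addr0 mul1r.
  case: (classic (exists p, Wz l l p)) => [[p Hp]|Hn2]; last first.
    by exists 0 => j Hj; exfalso; apply: Hn2; exists j.
  exists p => j Hj; case: (eqVneq j p) => // hjp; exfalso; apply: Hn; by exists j, p.
have [p Hp] := Hcov.
apply: (SpanContra (k:=k) (a1 := fun pq => Bk k j0 pq.1 * (pq.2 == 0)%:R)
  (a2 := fun pq => Bk k j0 pq.1 * (pq.2 == 1)%:R) (a3 := W k k p)) => j.
case: (classic (full j)) => Hf.
  have [HB _] := R1 hkl Ha Hza Hj0 Hf.
  have [s1 [s2 Hs]] := span_B HB (Hj0 k).1.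
  by exists s1, s2, 0 => pq; rewrite Hs mul0r addr0.
have [[Hkk|Hll] _] := nonfull Hf hkl.
  by exists 0, 0, 0 => pq; rewrite Hkk !mul0r !addr0.
rewrite (Hp j Hll).
by exists 0, 0, 1 => pq; rewrite mul1r !mul0r !add0r.
Qed.

Lemma dep_par k l a b : k != l -> full a -> full b -> ~ Ind a b ->
  cross (Bk k b) (Bk k a) = 0 /\ cross (Ck l b) (Ck l a) = 0.
Proof.
move=> hkl Ha Hb HnI.
have [al [be [HR Hnz]]] : exists al be, Rel (comb3 al a be b 0 a) /\ ~ (al = 0 /\ be = 0).
  apply: NNPP => H; apply: HnI => al be HR; apply: NNPP => H'; apply: H; by exists al, be.
have hbe : be != 0.
  apply/eqP => hbe; apply: Hnz; split => //.
  apply: (NZ_full Ha); apply: Rel_ext HR => j; by rewrite /comb3 hbe !mul0r.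
have E : forall p q, Bk k b p * Ck l b q = Bk k a p * (- (al / be) * Ck l a q).
  move=> p q; have := Ax1c HR hkl (p,q); rewrite mul0r addr0 /W /= /Bk /Ck => /eqP.
  rewrite addr_eq0 => /eqP E.
  have E2 : be * (v b (p, k) * w b (l, q)) = - (al * (v a (p, k) * w a (l, q))) by rewrite E opprK.
  apply: (mulfI hbe); rewrite E2; field; exact: hbe.
split; first exact: (cross_outer E (Hb l).2).
have E' : forall p q, Bk k b p * Ck l b q = (- (al / be) * Bk k a p) * Ck l a q.
  by move=> p q; rewrite E; ring.
exact: (cross_outer_r E' (Hb k).1).
Qed.

Section Glob.
Variables (k l : 'I_2) (j0 j1 : 'I_6).
Hypothesis hkl : k != l.
Hypothesis HI : Ind j0 j1.
Hypothesis Hall : forall j, full j.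

Lemma glob_B : cross (Bk k j0) (Bk k j1) = 0 -> forall j, cross (Bk k j) (Bk k j0) = 0.
Proof.
move=> HX j.
have HX' : cross (Bk k j1) (Bk k j0) = 0.
  by transitivity (- cross (Bk k j0) (Bk k j1)); [rewrite /cross; ring | rewrite HX oppr0].
have [s Hs] := par_scale HX' (Hall j0 k).1.
have [ga [de HR]] := D_lemma HI j.
apply: (cross_outer (y' := fun q => - ga * Ck l j0 q - de * s * Ck l j1 q) _ (Hall j l).2).
move=> p q; have := Ax1c HR hkl (p,q); rewrite mul1r /W /=.
move/eqP; rewrite -addrA addr_eq0 => /eqP ->.
have := Hs p; rewrite /Bk /Ck => ->; ring.
Qed.

Lemma glob_C : cross (Ck l j0) (Ck l j1) = 0 -> forall j, cross (Ck l j) (Ck l j0) = 0.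
Proof.
move=> HX j.
have HX' : cross (Ck l j1) (Ck l j0) = 0.
  by transitivity (- cross (Ck l j0) (Ck l j1)); [rewrite /cross; ring | rewrite HX oppr0].
have [s Hs] := par_scale HX' (Hall j0 l).2.
have [ga [de HR]] := D_lemma HI j.
apply: (cross_outer_r (x' := fun p => - ga * Bk k j0 p - de * s * Bk k j1 p) _ (Hall j k).1).
move=> p q; have := Ax1c HR hkl (p,q); rewrite mul1r /W /=.
move/eqP; rewrite -addrA addr_eq0 => /eqP ->.
have := Hs q; rewrite /Bk /Ck => ->; ring.
Qed.
End Glob.

Lemma case_none : (forall a, NZ a -> ~ Wz 0 1 a) -> (forall a, NZ a -> ~ Wz 1 0 a) -> False.
Proof.
move=> N01 N10.
have Hall : forall j, full j.
  move=> j; apply: NNPP => Hf.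
  have [[H00|H11] [H01|H10]] := nonfull Hf n01.
  - exact: (N01 j (NZ_Wz H00) H01).
  - exact: (N10 j (NZ_Wz H00) H10).
  - exact: (N01 j (NZ_Wz H11) H01).
  - exact: (N10 j (NZ_Wz H11) H10).
pose j0 : 'I_6 := 0.
have Hj0 := Hall j0.
have Hdep : forall j, ~ Ind j0 j -> exists s, forall pq, W 0 0 j pq = s * W 0 0 j0 pq.
  move=> j HnI.
  have [HB _] := dep_par n01 Hj0 (Hall j) HnI.
  have [_ HC] := dep_par n10 Hj0 (Hall j) HnI.
  exact: span_par HB HC Hj0.
case: (classic (forall j, ~ Ind j0 j)) => [HA|HA].
  apply: (SpanContra (k:=0) (a1 := W 0 0 j0) (a2 := fun _ => 0) (a3 := fun _ => 0)) => j.
  have [s Hs] := Hdep j (HA j).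
  by exists s, 0, 0 => pq; rewrite Hs !mul0r !addr0.
have [j1 HI1] : exists j1, Ind j0 j1.
  apply: NNPP => H; apply: HA => j Hj; apply: H; by exists j.
have Hdep1 : forall j, ~ Ind j1 j -> exists s, forall pq, W 0 0 j pq = s * W 0 0 j1 pq.
  move=> j HnI.
  have [HB _] := dep_par n01 (Hall j1) (Hall j) HnI.
  have [_ HC] := dep_par n10 (Hall j1) (Hall j) HnI.
  exact: span_par HB HC (Hall j1).
case: (classic (forall j, ~ Ind j0 j \/ ~ Ind j1 j)) => [HB1|HB1].
  apply: (SpanContra (k:=0) (a1 := W 0 0 j0) (a2 := W 0 0 j1) (a3 := fun _ => 0)) => j.
  case: (HB1 j) => H.
    have [s Hs] := Hdep j H.
    by exists s, 0, 0 => pq; rewrite Hs !mul0r !addr0.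
  have [s Hs] := Hdep1 j H.
  by exists 0, s, 0 => pq; rewrite Hs !mul0r !addr0 add0r.
have [j2 [HI02 HI12]] : exists j2, Ind j0 j2 /\ Ind j1 j2.
  apply: NNPP => H; apply: HB1 => j; apply: NNPP => H'; apply: H; exists j.
  split; apply: NNPP => H''; apply: H'; by [left|right].
have [ga [de HR]] := D_lemma HI1 j2.
have hga : ga != 0.
  apply/eqP => hg.
  have := HI12 de 1; case.
    apply: Rel_ext HR => j; rewrite /comb3 hg; ring.
  by move=> _ /eqP; rewrite oner_eq0.
have hde : de != 0.
  apply/eqP => hd.
  have := HI02 ga 1; case.
    apply: Rel_ext HR => j; rewrite /comb3 hd; ring.
  by move=> _ /eqP; rewrite oner_eq0.
have Hdet : forall k l, k != l ->
    cross (Bk k j0) (Bk k j1) = 0 \/ cross (Ck l j0) (Ck l j1) = 0.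
  move=> k l hkl.
  have E : forall p q, Bk k j2 p * Ck l j2 q =
      - ga * (Bk k j0 p * Ck l j0 q) + - de * (Bk k j1 p * Ck l j1 q).
    move=> p q; have := Ax1c HR hkl (p,q); rewrite mul1r /W /= => /eqP.
    rewrite -addrA addr_eq0 => /eqP; rewrite /Bk /Ck => ->; ring.
  have := det_lemma E.
  move=> E2; move/eqP: E2; rewrite !mulf_eq0 !oppr_eq0 (negbTE hga) (negbTE hde) /=.
  by case/orP => /eqP; [left|right].
case: (Hdet 0 1 n01) => [HB0|HC1]; case: (Hdet 1 0 n10) => [HB1'|HC0].
-
  have GB := glob_B n01 HI1 Hall HB0.
  apply: (SpanContra (k:=0) (a1 := fun pq => Bk 0 j0 pq.1 * (pq.2 == 0)%:R)
    (a2 := fun pq => Bk 0 j0 pq.1 * (pq.2 == 1)%:R) (a3 := fun _ => 0)) => j.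
  have [s1 [s2 Hs]] := span_B (GB j) (Hj0 0).1.
  by exists s1, s2, 0 => pq; rewrite Hs mul0r addr0.
-
  have GB := glob_B n01 HI1 Hall HB0.
  have GC := glob_C n10 HI1 Hall HC0.
  apply: (SpanContra (k:=0) (a1 := W 0 0 j0) (a2 := fun _ => 0) (a3 := fun _ => 0)) => j.
  have [s Hs] := span_par (GB j) (GC j) Hj0.
  by exists s, 0, 0 => pq; rewrite Hs !mul0r !addr0.
-
  have GB := glob_B n10 HI1 Hall HB1'.
  have GC := glob_C n01 HI1 Hall HC1.
  apply: (SpanContra (k:=1) (a1 := W 1 1 j0) (a2 := fun _ => 0) (a3 := fun _ => 0)) => j.
  have [s Hs] := span_par (GB j) (GC j) Hj0.
  by exists s, 0, 0 => pq; rewrite Hs !mul0r !addr0.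
-
  have GC := glob_C n10 HI1 Hall HC0.
  apply: (SpanContra (k:=0) (a1 := fun pq => (pq.1 == 0)%:R * Ck 0 j0 pq.2)
    (a2 := fun pq => (pq.1 == 1)%:R * Ck 0 j0 pq.2) (a3 := fun _ => 0)) => j.
  have [s1 [s2 Hs]] := span_C (GC j) (Hj0 0).2.
  by exists s1, s2, 0 => pq; rewrite Hs mul0r addr0.
Qed.

Lemma core_false : False.
Proof.
case: (classic (exists a, NZ a /\ Wz 0 1 a)) => H01; case: (classic (exists a, NZ a /\ Wz 1 0 a)) => H10.
- exact: case_both H01 H10.
- apply: (case_one n01 H01) => a Ha Hz; apply: H10; by exists a.
- apply: (case_one n10 H10) => a Ha Hz; apply: H01; by exists a.
- apply: case_none => a Ha Hz; [apply: H01 | apply: H10]; by exists a.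
Qed.

End Core.

Definition sel (F : fieldType) (a b c d : F) (x : idx) : F :=
  if x.1 == 0 then (if x.2 == 0 then a else b) else (if x.2 == 0 then c else d).

Definition Su (F : fieldType) (l : 'I_7) : idx -> F :=
  match val l with
  | 0 => sel 1 0 0 1 | 1 => sel 0 0 1 1 | 2 => sel 1 0 0 0 | 3 => sel 0 0 0 1
  | 4 => sel 1 1 0 0 | 5 => sel (-1) 0 1 0 | _ => sel 0 1 0 (-1) end.
Definition Sv (F : fieldType) (l : 'I_7) : idx -> F :=
  match val l with
  | 0 => sel 1 0 0 1 | 1 => sel 1 0 0 0 | 2 => sel 0 1 0 (-1) | 3 => sel (-1) 0 1 0
  | 4 => sel 0 0 0 1 | 5 => sel 1 1 0 0 | _ => sel 0 0 1 1 end.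
Definition Sw (F : fieldType) (l : 'I_7) : idx -> F :=
  match val l with
  | 0 => sel 1 0 0 1 | 1 => sel 0 1 0 (-1) | 2 => sel 0 0 1 1 | 3 => sel 1 1 0 0
  | 4 => sel (-1) 0 1 0 | 5 => sel 0 0 0 1 | _ => sel 1 0 0 0 end.

Lemma strassen (F : fieldType) : rank_le (matmul222 F) 7.
Proof.
exists (@Su F), (@Sv F), (@Sw F) => [[x1 x2] [y1 y2] [z1 z2]].
rewrite !big_ord_recr big_ord0 /=.
case: (ord2 x1) => ->; case: (ord2 x2) => ->; case: (ord2 y1) => ->;
case: (ord2 y2) => ->; case: (ord2 z1) => ->; case: (ord2 z2) => ->;
rewrite /matmul222 /Su /Sv /Sw /sel /=; ring.
Qed.

Lemma rank_le_mono (F : fieldType) (t : tensor F) (r1 r2 : nat) :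
  (r1 <= r2)%N -> rank_le t r1 -> rank_le t r2.
Proof.
move=> Hr [u [v [w Ht]]].
pose ext (f : 'I_r1 -> idx -> F) (j : 'I_r2) (x : idx) := oapp (fun i : 'I_r1 => f i x) 0 (insub (val j)).
exists (ext u), (ext v), (ext w) => x y z.
pose G (n : nat) := oapp (fun i : 'I_r1 => u i x * v i y * w i z) 0 (insub n).
have E1 : \sum_(i < r1) u i x * v i y * w i z = \sum_(i < r1) G i.
  by apply: eq_bigr => i _; rewrite /G valK.
rewrite Ht E1 (big_ord_widen _ G Hr) big_mkcond /=.
apply: eq_bigr => j _; rewrite /ext /G.
case: ifP => h; first by rewrite insubT.
by rewrite insubN ?h //= !mul0r.
Qed.

Lemma lower (F : fieldType) (t : tensor F) : same_support t (matmul222 F) ->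
  forall r, rank_le t r -> (7 <= r)%N.
Proof.
move=> Hs r Hr; rewrite leqNgt; apply/negP => Hlt.
have [u [v [w Ht]]] := rank_le_mono (r2 := 6) Hlt Hr.
have HT : forall x y z, TT u v w x y z = t x y z by move=> x y z; rewrite /TT Ht.
apply: (@core_false F u v w).
- move=> x y z Hyz; rewrite HT; apply/eqP; rewrite -[_ == 0]negbK Hs /matmul222.
  by rewrite (negbTE Hyz) /= andbF eqxx.
- move=> [x1 x2] p q k; rewrite HT Hs /matmul222 eqxx /= xpair_eqE [q == x1]eq_sym.
  by case: (x2 == p); case: (x1 == q); rewrite /= ?oner_eq0 ?eqxx.
Qed.

Theorem theorem1_aux (F : fieldType) : is_support_rank (matmul222 F) 7.
Proof.
split.
- exists (matmul222 F); split; first by move=> x y z.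
  split; first exact: strassen.
  by apply: lower => x y z.
- exact: lower.
Qed.

Local Close Scope ring_scope.

Theorem theorem1 (F : fieldType) : is_support_rank (matmul222 F) 7.
Proof. exact: theorem1_aux. Qed.
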